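(* For a happy sequent $G$, its model $\mathcal{M}(G)=\langle \mathrm{Lab}(G), \le_G, R_G, V\rangle$ is a birelational model in which $R_G$ is transitive and reflexive, and which has the following two properties: (i) if $x:A$ occurs on the left-hand side of $G$, then $x \Vdash A$ in $\mathcal{M}(G)$; (ii) if $x:A$ occurs on the right-hand side of $G$, then $x \not\Vdash A$ in $\mathcal{M}(G)$.
   Context: Formulas are built from atoms $a$ and $\bot$ by $\wedge,\vee,\supset,\Box,\Diamond$. A birelational model $\langle W,R,\le,V\rangle$ consists of a nonempty set $W$, a relation $R$, a preorder $\le$ on $W$ satisfying (F1) if $xRy$ and $y\le z$ then there is $u$ with $x\le u$ and $uRz$, and (F2) if $x\le z$ and $xRy$ then there is $u$ with $zRu$ and $y\le u$, and a valuation $V\colon W\to 2^{\mathrm{Atoms}}$ that is monotone along $\le$. Forcing: $w\Vdash a$ iff $a\in V(w)$; $w\not\Vdash\bot$; $\wedge,\vee$ pointwise; $w\Vdash A\supset B$ iff for all $w'\ge w$, $w'\Vdash A$ implies $w'\Vdash B$; $w\Vdash\Box A$ iff for all $w',u$ with $w\le w'$ and $w'Ru$, $u\Vdash A$; $w\Vdash\Diamond A$ iff there is $u$ with $wRu$ and $u\Vdash A$. A labelled sequent $G$ is $\mathcal{R},\Gamma\Longrightarrow\Delta$, where $\mathcal{R}$ is a set of relational atoms $x\le y$ and $xRy$ between labels, and $\Gamma,\Delta$ are multisets of labelled formulas $x:A$. Write $x\le_G y$ ($xR_Gy$) if that atom is in $\mathcal{R}$; write $x:A^\bullet$ if $x:A\in\Gamma$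 and $x:A^\circ$ if $x:A\in\Delta$; $\mathrm{Lab}(G)$ is the set of labels of $G$. A labelled formula is happy in $G$ as follows: $x:a^\bullet$ always; $x:a^\circ$ iff not $x:a^\bullet$; $x:\bot^\bullet$ never; $x:\bot^\circ$ always; $x:(A\wedge B)^\bullet$ iff $x:A^\bullet$ and $x:B^\bullet$; $x:(A\wedge B)^\circ$ iff $x:A^\circ$ or $x:B^\circ$; $x:(A\vee B)^\bullet$ iff $x:A^\bullet$ or $x:B^\bullet$; $x:(A\vee B)^\circ$ iff $x:A^\circ$ and $x:B^\circ$; $x:(A\supset B)^\bullet$ iff $x:A^\circ$ or $x:B^\bullet$; $x:(A\supset B)^\circ$ iff $y:A^\bullet$ and $y:B^\circ$ for some $y$ with $x\le_G y$; $x:(\Box A)^\bullet$ iff $z:A^\bullet$ and $z:(\Box A)^\bullet$ for all $z$ with $xR_Gz$; $x:(\Box A)^\circ$ iff $z:A^\circ$ for some $y,z$ with $x\le_G y$, $yR_Gz$; $x:(\Diamond A)^\bullet$ iff $y:A^\bullet$ for some $y$ with $xR_Gy$; $x:(\Diamond A)^\circ$ iff $y:A^\circ$ and $y:(\Diamond A)^\circ$ for all $y$ with $xR_Gy$. A label is happy iff all formulas occurring at it are happy. $G$ is structurally saturated iff: if $x\le_G y$ and $x:C^\bullet$ then $y:C^\bullet$; (F1) and (F2) hold for $R_G,\le_G$; $\le_G$ and $R_G$ are reflexive on all labels of $G$ and transitive. $G$ is happy iff it is structurally saturated and all its labels are happy. The model of $G$ is $\mathcal{M}(G)=\langle \mathrm{Lab}(G),\le_G,R_G,V\rangle$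 with $a\in V(w)$ iff $w:a^\bullet$ in $G$. *)

(* Defs.v *)
From Stdlib Require Import List.
Import ListNotations.

Inductive form : Type :=
| Atom : nat -> form
| Bot : form
| And : form -> form -> form
| Or : form -> form -> form
| Imp : form -> form -> form
| Box : form -> form
| Dia : form -> form.

Record model : Type := Model {
  world : Type;
  mR : world -> world -> Prop;
  mle : world -> world -> Prop;
  mV : world -> nat -> Prop
}.

Definition is_birelational (M : model) : Prop :=
  inhabited (world M) /\
  (forall x, mle M x x) /\
  (forall x y z, mle M x y -> mle M y z -> mle M x z) /\
  (forall x y z, mR M x y -> mle M y z -> exists u, mle M x u /\ mR M u z) /\
  (forall x y z, mle M x z -> mR M x y -> exists u, mR M z u /\ mle M y u) /\
  (forall x y a, mle M x y -> mV M x a -> mV M y a).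

Fixpoint forces (M : model) (w : world M) (A : form) : Prop :=
  match A with
  | Atom a => mV M w a
  | Bot => False
  | And B C => forces M w B /\ forces M w C
  | Or B C => forces M w B \/ forces M w C
  | Imp B C => forall w', mle M w w' -> forces M w' B -> forces M w' C
  | Box B => forall w' u, mle M w w' -> mR M w' u -> forces M u B
  | Dia B => exists u, mR M w u /\ forces M u B
  end.

Inductive relatom : Type :=
| LeAt : nat -> nat -> relatom
| RAt : nat -> nat -> relatom.

(* R, Gamma ==> Delta ; multisets represented as lists *)
Record sequent : Type := Sequent {
  rels : list relatom;
  lhs : list (nat * form);
  rhs : list (nat * form)
}.

Definition leG (G : sequent) (x y : nat) : Prop := In (LeAt x y) (rels G).
Definition RG (G : sequent) (x y : nat) : Prop := In (RAt x y) (rels G).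
Definition inL (G : sequent) (x : nat) (A : form) : Prop := In (x, A) (lhs G).
Definition inR (G : sequent) (x : nat) (A : form) : Prop := In (x, A) (rhs G).

Definition InLab (G : sequent) (x : nat) : Prop :=
  (exists y, leG G x y \/ leG G y x \/ RG G x y \/ RG G y x) \/
  (exists A, inL G x A \/ inR G x A).

Definition happyL (G : sequent) (x : nat) (A : form) : Prop :=
  match A with
  | Atom _ => True
  | Bot => False
  | And B C => inL G x B /\ inL G x C
  | Or B C => inL G x B \/ inL G x C
  | Imp B C => inR G x B \/ inL G x C
  | Box B => forall z, RG G x z -> inL G z B /\ inL G z (Box B)
  | Dia B => exists y, RG G x y /\ inL G y B
  end.

Definition happyR (G : sequent) (x : nat) (A : form) : Prop :=
  match A with
  | Atom a => ~ inL G x (Atom a)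
  | Bot => True
  | And B C => inR G x B \/ inR G x C
  | Or B C => inR G x B /\ inR G x C
  | Imp B C => exists y, leG G x y /\ inL G y B /\ inR G y C
  | Box B => exists y z, leG G x y /\ RG G y z /\ inR G z B
  | Dia B => forall y, RG G x y -> inR G y B /\ inR G y (Dia B)
  end.

Definition happy_label (G : sequent) (x : nat) : Prop :=
  (forall A, inL G x A -> happyL G x A) /\
  (forall A, inR G x A -> happyR G x A).

Definition struct_saturated (G : sequent) : Prop :=
  (forall x y C, leG G x y -> inL G x C -> inL G y C) /\
  (forall x y z, RG G x y -> leG G y z -> exists u, leG G x u /\ RG G u z) /\
  (forall x y z, leG G x z -> RG G x y -> exists u, RG G z u /\ leG G y u) /\
  (forall x, InLab G x -> leG G x x) /\
  (forall x, InLab G x -> RG G x x) /\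
  (forall x y z, leG G x y -> leG G y z -> leG G x z) /\
  (forall x y z, RG G x y -> RG G y z -> RG G x z).

Definition happy (G : sequent) : Prop :=
  struct_saturated G /\ (forall x, InLab G x -> happy_label G x).

Definition labT (G : sequent) : Type := { x : nat | InLab G x }.

Definition modelOf (G : sequent) : model :=
  {| world := labT G;
     mR := fun u v => RG G (proj1_sig u) (proj1_sig v);
     mle := fun u v => leG G (proj1_sig u) (proj1_sig v);
     mV := fun w a => inL G (proj1_sig w) (Atom a) |}.

(* Main.v *)
Require Import Defs.
From Stdlib Require Import List.

Lemma lab_le_l G x y : leG G x y -> InLab G x.
Proof. intro H; left; exists y; auto. Qed.
Lemma lab_le_r G x y : leG G x y -> InLab G y.
Proof. intro H; left; exists x; auto. Qed.
Lemma lab_R_l G x y : RG G x y -> InLab G x.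
Proof. intro H; left; exists y; auto. Qed.
Lemma lab_R_r G x y : RG G x y -> InLab G y.
Proof. intro H; left; exists x; auto. Qed.
Lemma lab_L G x A : inL G x A -> InLab G x.
Proof. intro H; right; exists A; auto. Qed.
Lemma lab_R G x A : inR G x A -> InLab G x.
Proof. intro H; right; exists A; auto. Qed.

Lemma truth G (Hh : happy G) : forall A (w : labT G),
  (inL G (proj1_sig w) A -> forces (modelOf G) w A) /\
  (inR G (proj1_sig w) A -> ~ forces (modelOf G) w A).
Proof.
  destruct Hh as [[Hmon [HF1 [HF2 [Hlr [HRr [Hlt HRt]]]]]] Hlab].
  induction A as [a| |B IHB C IHC|B IHB C IHC|B IHB C IHC|B IHB|B IHB];
    intros [x Hx]; simpl; destruct (Hlab x Hx) as [HL HR]; split; intro H.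
  - exact H.
  - exact (HR _ H).
  - exact (HL _ H).
  - tauto.
  - destruct (HL _ H) as [H1 H2].
    split; [apply (proj1 (IHB (exist _ x Hx))) | apply (proj1 (IHC (exist _ x Hx)))]; auto.
  - destruct (HR _ H) as [H1|H1]; intros [F1 F2].
    + exact (proj2 (IHB (exist _ x Hx)) H1 F1).
    + exact (proj2 (IHC (exist _ x Hx)) H1 F2).
  - destruct (HL _ H) as [H1|H1]; [left|right].
    + apply (proj1 (IHB (exist _ x Hx))); auto.
    + apply (proj1 (IHC (exist _ x Hx))); auto.
  - destruct (HR _ H) as [H1 H2]; intros [F|F].
    + exact (proj2 (IHB (exist _ x Hx)) H1 F).
    + exact (proj2 (IHC (exist _ x Hx)) H2 F).
  - intros [y Hy] Hxy FB; simpl in Hxy.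
    assert (H' : inL G y (Imp B C)) by (eapply Hmon; eauto).
    destruct (Hlab y Hy) as [HL' _].
    destruct (HL' _ H') as [H1|H1].
    + exfalso; exact (proj2 (IHB (exist _ y Hy)) H1 FB).
    + exact (proj1 (IHC (exist _ y Hy)) H1).
  - destruct (HR _ H) as [y [Hxy [H1 H2]]]; intro F.
    specialize (F (exist _ y (lab_le_r _ _ _ Hxy)) Hxy).
    apply (proj2 (IHC (exist _ y (lab_le_r _ _ _ Hxy))) H2).
    apply F. apply (proj1 (IHB (exist _ y (lab_le_r _ _ _ Hxy))) H1).
  - intros [y Hy] [u Hu] Hxy Hyu; simpl in *.
    assert (H' : inL G y (Box B)) by (eapply Hmon; eauto).
    destruct (Hlab y Hy) as [HL' _].
    destruct (HL' _ H' u Hyu) as [H1 _].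
    exact (proj1 (IHB (exist _ u Hu)) H1).
  - destruct (HR _ H) as [y [z [Hxy [Hyz Hz]]]]; intro F.
    apply (proj2 (IHB (exist _ z (lab_R_r _ _ _ Hyz))) Hz).
    apply (F (exist _ y (lab_le_r _ _ _ Hxy)) (exist _ z (lab_R_r _ _ _ Hyz))); simpl; auto.
  - destruct (HL _ H) as [y [Hxy Hy]].
    exists (exist _ y (lab_R_r _ _ _ Hxy)); simpl; split; auto.
    exact (proj1 (IHB (exist _ y (lab_R_r _ _ _ Hxy))) Hy).
  - intros [[u Hu] [Hxu F]]; simpl in Hxu.
    destruct (HR _ H u Hxu) as [H1 _].
    exact (proj2 (IHB (exist _ u Hu)) H1 F).
Qed.

Theorem mainTheorem3 (G : sequent) (Hhappy : happy G)
  (Hne : exists x, InLab G x) :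
  is_birelational (modelOf G) /\
  (forall u v w : world (modelOf G),
      mR (modelOf G) u v -> mR (modelOf G) v w -> mR (modelOf G) u w) /\
  (forall u : world (modelOf G), mR (modelOf G) u u) /\
  (forall (x : nat) (A : form) (Hx : InLab G x),
      inL G x A -> forces (modelOf G) (exist _ x Hx) A) /\
  (forall (x : nat) (A : form) (Hx : InLab G x),
      inR G x A -> ~ forces (modelOf G) (exist _ x Hx) A).
Proof.
  pose proof (truth G Hhappy) as T.
  destruct Hhappy as [[Hmon [HF1 [HF2 [Hlr [HRr [Hlt HRt]]]]]] Hlab].
  split; [|split; [|split; [|split]]].
  - split; [|split; [|split; [|split; [|split]]]].
    + destruct Hne as [x Hx]. exact (inhabits (exist _ x Hx)).
    + intros [x Hx]; simpl; auto.
    + intros [x ?] [y ?] [z ?]; simpl; eauto.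
    + intros [x ?] [y ?] [z ?]; simpl; intros H1 H2.
      destruct (HF1 _ _ _ H1 H2) as [u [Hu1 Hu2]].
      exists (exist _ u (lab_le_r _ _ _ Hu1)); simpl; auto.
    + intros [x ?] [y ?] [z ?]; simpl; intros H1 H2.
      destruct (HF2 _ _ _ H1 H2) as [u [Hu1 Hu2]].
      exists (exist _ u (lab_R_r _ _ _ Hu1)); simpl; auto.
    + intros [x ?] [y ?] a; simpl; intros H1 H2. eapply Hmon; eauto.
  - intros [x ?] [y ?] [z ?]; simpl; eauto.
  - intros [x Hx]; simpl; auto.
  - intros x A Hx. exact (proj1 (T A (exist _ x Hx))).
  - intros x A Hx. exact (proj2 (T A (exist _ x Hx))).
Qed.
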